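(* Let $G$ be a graph with $\mathrm{mad}(G)<\frac{10}{3}$. Then $\chi_c^{\star}(G)\leq 4$. In particular, every planar graph of girth at least $5$ satisfies $\chi_\ell^\star(G)\le\chi_c^\star(G)\leq 4$.
   Context: All graphs are finite and simple. $\mathrm{mad}(G)$ denotes the maximum, over all subgraphs of $G$, of their average degree. A correspondence-cover of a graph $G$ is a pair $(L,H)$ where $H$ is a graph and $L$ maps each $v\in V(G)$ to a subset $L(v)\subseteq V(H)$ such that: the sets $L(v)$ partition $V(H)$; each $L(v)$ induces a clique in $H$; if $uv\notin E(G)$ there are no edges of $H$ between $L(u)$ and $L(v)$; if $uv\in E(G)$ the edges of $H$ between $L(u)$ and $L(v)$ form a matching. The cover is $k$-fold if $|L(v)|=k$ for all $v$. An independent transversal of $(L,H)$ is an independent set of $H$ containing exactly one vertex of each $L(v)$. A $k$-fold cover has a packing if it has $k$ pairwise vertex-disjoint independent transversals. The correspondence packing number $\chi_c^{\star}(G)$ is the least $k\geq 1$ such that every $k$-fold correspondence-cover of $G$ has a packing. A list-assignment $L$ (with $L(v)\subseteq\mathbb{N}$) gives the list-cover with vertices $(v,x)$, $x\in L(v)$, cliques on each list, and edges $(u,x)(v,x)$ for $uv\in E(G)$; $\chi_\ell^\star(G)$ is defined like $\chi_c^\star(G)$ but only over $k$-fold list-covers. *)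

(* Defs.v *)
From mathcomp Require Import all_boot all_order all_algebra.
Set Implicit Arguments. Unset Strict Implicit. Unset Printing Implicit Defensive.
Import Order.TTheory GRing.Theory Num.Theory.

Definition simple_graph (T : finType) (e : rel T) : Prop :=
  symmetric e /\ irreflexive e.

Definition avg_deg (T : finType) (S : {set T}) (F : rel T) : rat :=
  ((\sum_(v in S) #|[set u in S | F v u]|)%:R / #|S|%:R)%R.

(* A subgraph is a nonempty vertex set S with a symmetric sub-relation F of e
   (edges of F outside S are ignored, i.e. only edges inside S count). *)
Definition mad_lt (T : finType) (e : rel T) (r : rat) : Prop :=
  forall (S : {set T}) (F : rel T),
    S != set0 -> symmetric F -> subrel F e -> (avg_deg S F < r)%R.

Definition corr_cover (T : finType) (e : rel T)
    (VH : finType) (h : rel VH) (L : T -> {set VH}) : Prop :=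
  simple_graph h /\
  (forall x : VH, exists v, x \in L v) /\
  (forall u v : T, u != v -> [disjoint L u & L v]) /\
  (forall v (x y : VH), x \in L v -> y \in L v -> x != y -> h x y) /\
  (forall u v (x y : VH), u != v -> ~~ e u v -> x \in L u -> y \in L v -> ~~ h x y) /\
  (forall u v (x y y' : VH), e u v -> x \in L u -> y \in L v -> y' \in L v ->
      h x y -> h x y' -> y = y').

Definition k_fold (T : finType) (VH : finType) (L : T -> {set VH}) (k : nat) : Prop :=
  forall v, #|L v| = k.

Definition indep_transversal (T : finType) (VH : finType) (h : rel VH)
    (L : T -> {set VH}) (I : {set VH}) : Prop :=
  (forall x y, x \in I -> y \in I -> ~~ h x y) /\
  (forall v, #|I :&: L v| = 1%N).

Definition has_packing (T : finType) (VH : finType) (h : rel VH)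
    (L : T -> {set VH}) (k : nat) : Prop :=
  exists P : 'I_k -> {set VH},
    (forall i, indep_transversal h L (P i)) /\
    (forall i j, i != j -> [disjoint P i & P j]).

Definition all_corr_covers_pack (T : finType) (e : rel T) (k : nat) : Prop :=
  forall (VH : finType) (h : rel VH) (L : T -> {set VH}),
    corr_cover e h L -> k_fold L k -> has_packing h L k.

(* chi_c^star(G) <= m, where chi_c^star(G) is the least k >= 1 such that every
   k-fold correspondence-cover has a packing: i.e. some such k <= m exists. *)
Definition chi_c_star_le (T : finType) (e : rel T) (m : nat) : Prop :=
  exists k, (1 <= k <= m)%N /\ all_corr_covers_pack e k.

(* Main.v *)
Require Import Defs.
From mathcomp Require Import all_boot all_order all_algebra.
From mathcomp Require Import all_fingroup.
From Stdlib Require Import Lia.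
From mathcomp Require Import zify lra.
Set Implicit Arguments. Unset Strict Implicit. Unset Printing Implicit Defensive.

Module PA.

Fixpoint tuples (n m : nat) : seq (seq nat) :=
  if n is n'.+1 then flatten [seq [seq x :: t | t <- tuples n' m] | x <- iota 0 m]
  else [:: [::]].

Lemma tuplesP n m s : (s \in tuples n m) = (size s == n) && all (fun x => x < m) s.
Proof.
elim: n s => [|n IH] [|x s] /=.
- by [].
- by rewrite inE.
- by apply/negbTE/flattenP => -[t /mapP [x' _ ->]] /mapP [t' _].
- apply/idP/idP.
  + move=> /flattenP [t /mapP [x' Hx' ->]] /mapP [t' Ht' [-> ->]].
    move: Ht'; rewrite IH => /andP [/eqP -> ->]; rewrite mem_iota in Hx'.
    by rewrite eqxx /= andbT; case/andP: Hx'.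
  + move=> /andP [Hs /andP [Hx Ha]].
    apply/flattenP; exists [seq x :: t | t <- tuples n m].
      by apply/mapP; exists x; rewrite ?mem_iota.
    apply/mapP; exists s => //; rewrite IH Ha andbT; by [].
Qed.

Definition allp : seq (seq nat) := [:: [:: 0; 1; 2; 3]; [:: 0; 1; 3; 2]; [:: 0; 2; 1; 3]; [:: 0; 2; 3; 1]; [:: 0; 3; 1; 2]; [:: 0; 3; 2; 1]; [:: 1; 0; 2; 3]; [:: 1; 0; 3; 2]; [:: 1; 2; 0; 3]; [:: 1; 2; 3; 0]; [:: 1; 3; 0; 2]; [:: 1; 3; 2; 0]; [:: 2; 0; 1; 3]; [:: 2; 0; 3; 1]; [:: 2; 1; 0; 3]; [:: 2; 1; 3; 0]; [:: 2; 3; 0; 1]; [:: 2; 3; 1; 0]; [:: 3; 0; 1; 2]; [:: 3; 0; 2; 1]; [:: 3; 1; 0; 2]; [:: 3; 1; 2; 0]; [:: 3; 2; 0; 1]; [:: 3; 2; 1; 0]].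
Lemma allpE : allp = filter uniq (tuples 4 4). Proof. by vm_compute. Qed.

Lemma allpP s : s \in allp -> [/\ size s = 4, all (fun x => x < 4) s & uniq s].
Proof. by rewrite allpE mem_filter tuplesP => /andP [-> /andP [/eqP -> ->]]. Qed.

Lemma allpI s : size s = 4 -> all (fun x => x < 4) s -> uniq s -> s \in allp.
Proof. by move=> Hs Ha Hu; rewrite allpE mem_filter tuplesP Hs Ha Hu. Qed.

Fixpoint hasb (p : seq nat -> bool) (s : seq (seq nat)) : bool :=
  if s is x :: s' then (if p x then true else hasb p s') else false.
Fixpoint allb (p : seq nat -> bool) (s : seq (seq nat)) : bool :=
  if s is x :: s' then (if p x then allb p s' else false) else true.
Lemma hasbE p s : hasb p s = has p s.
Proof. by elim: s => //= x s ->; case: (p x). Qed.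
Lemma allbE p s : allb p s = all p s.
Proof. by elim: s => //= x s ->; case: (p x). Qed.

Fixpoint av (s t : seq nat) : bool :=
  match s, t with a :: s', b :: t' => if a == b then false else av s' t' | _, _ => true end.
Fixpoint avk (k sx sy : seq nat) : bool :=
  match sx, sy with a :: sx', b :: sy' => if b == nth 0 k a then false else avk k sx' sy' | _, _ => true end.
Fixpoint extl (l s : seq nat) : bool :=
  match l, s with x :: l', y :: s' => if (x == 4) || (x == y) then extl l' s' else false | _, _ => true end.

Lemma avP s t i : av s t -> i < size s -> i < size t -> nth 0 s i != nth 0 t i.
Proof.
elim: s t i => [|a s IH] [|b t] [|i] //=; case: (a == b) => //.
by move=> H; apply: IH.
Qed.
Lemma avkP k s t i : avk k s t -> i < size s -> i < size t -> nth 0 t i != nth 0 k (nth 0 s i).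
Proof.
elim: s t i => [|a s IH] [|b t] [|i] //=; case: (b == _) => //.
by move=> H; apply: IH.
Qed.
Lemma extlP l s i : extl l s -> i < size l -> i < size s -> (nth 0 l i == 4) || (nth 0 l i == nth 0 s i).
Proof.
elim: l s i => [|a l IH] [|b s] [|i] //=; case: ifP => //.
by move=> _ H; apply: IH.
Qed.

Definition LAb := allb (fun a1 => allb (fun a2 => hasb (fun s => if av a1 s then av a2 s else false) allp) allp) allp.
Lemma LAc : LAb. Proof. vm_compute. reflexivity. Qed.

Definition goodx a1 a2 su := hasb (fun s => if av a1 s then if av a2 s then av su s else false else false) allp.
Definition LBcnt := allb (fun a1 => allb (fun a2 => let G := [seq goodx a1 a2 su | su <- allp] in allb (fun b =>
   count id (map (fun p => if av b p.1 then ~~ p.2 else false) (zip allp G)) <= 4) allp) allp) allp.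
Lemma LBc : LBcnt. Proof. vm_compute. reflexivity. Qed.
Definition LB9 := allb (fun b => 9 <= count (av b) allp) allp.
Lemma LB9c : LB9. Proof. vm_compute. reflexivity. Qed.

Definition LCb := allb (fun b => allb (fun a => allb (fun c => allb (fun k =>
  hasb (fun su => if av b su then hasb (fun sx => if av a sx then if av sx su then
      hasb (fun sy => if av c sy then if av su sy then avk k sx sy else false else false) allp else false else false) allp else false) allp) allp) allp) allp) allp.
Lemma LCc : LCb. Proof. vm_compute. reflexivity. Qed.

Definition PEb := allb (fun l => if uniq (filter (fun x => x != 4) l) then hasb (extl l) allp else true) (tuples 4 5).
Lemma PEc : PEb. Proof. vm_compute. reflexivity. Qed.

End PA.
Import PA.

Module PB.

Lemma LA_list a1 a2 : a1 \in allp -> a2 \in allp -> exists2 s, s \in allp & av a1 s && av a2 s.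
Proof.
move=> H1 H2; have := LAc; rewrite /LAb allbE => /allP /(_ _ H1).
rewrite allbE => /allP /(_ _ H2); rewrite hasbE => /hasP [s Hs Hp]; by exists s.
Qed.

Lemma count_split (T : Type) (a b : pred T) s : count a s = count (fun x => a x && b x) s + count (fun x => a x && ~~ b x) s.
Proof. by elim: s => //= x s ->; case: (a x); case: (b x) => //=; rewrite addnS. Qed.

Lemma zip_map_self (T U : Type) (f : T -> U) s : zip s (map f s) = map (fun x => (x, f x)) s.
Proof. by elim: s => //= x s ->. Qed.

Lemma goodxP a1 a2 su : goodx a1 a2 su = has (fun s => [&& av a1 s, av a2 s & av su s]) allp.
Proof. rewrite /goodx hasbE; apply: eq_has => s; by case: (av a1 s); case: (av a2 s). Qed.

Lemma LB_list a1 a2 b c1 c2 : a1 \in allp -> a2 \in allp -> b \in allp -> c1 \in allp -> c2 \in allp ->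
  exists su, [/\ su \in allp, av b su, goodx a1 a2 su & goodx c1 c2 su].
Proof.
move=> H1 H2 Hb H3 H4.
have cnt : forall x1 x2, x1 \in allp -> x2 \in allp -> count (fun su => av b su && ~~ goodx x1 x2 su) allp <= 4.
  move=> x1 x2 Hx1 Hx2; have := LBc; rewrite /LBcnt allbE => /allP /(_ _ Hx1).
  rewrite allbE => /allP /(_ _ Hx2); rewrite allbE => /allP /(_ _ Hb).
  rewrite zip_map_self -map_comp count_map.
  congr (_ <= _); apply: eq_count => su /=; by case: (av b su).
have c9 : 9 <= count (av b) allp.
  by have := LB9c; rewrite /LB9 allbE => /allP /(_ _ Hb).
have /hasP [su Hsu Hp] : has (fun su => av b su && goodx a1 a2 su && goodx c1 c2 su) allp.
  rewrite has_count lt0n; apply/negP => /eqP H0.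
  have := cnt _ _ H1 H2; have := cnt _ _ H3 H4.
  move: c9; rewrite (count_split _ (goodx a1 a2)).
  rewrite (count_split (fun x => av b x && goodx a1 a2 x) (goodx c1 c2)) H0 add0n.
  have : count (fun x => (av b x && goodx a1 a2 x) && ~~ goodx c1 c2 x) allp <=
         count (fun su => av b su && ~~ goodx c1 c2 su) allp.
    by apply: sub_count => x /=; case: (av b x); case: (goodx a1 a2 x).
  lia.
by exists su; move: Hp => /andP [/andP [-> ->] ->].
Qed.

Lemma LC_list a b c k : a \in allp -> b \in allp -> c \in allp -> k \in allp ->
  exists su sx sy, [/\ su \in allp, sx \in allp, sy \in allp &
     [&& av b su, av a sx, av sx su, av c sy, av su sy & avk k sx sy]].
Proof.
move=> Ha Hb Hc Hk; have := LCc; rewrite /LCb allbE => /allP /(_ _ Hb).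
rewrite allbE => /allP /(_ _ Ha); rewrite allbE => /allP /(_ _ Hc).
rewrite allbE => /allP /(_ _ Hk); rewrite hasbE => /hasP [su Hsu].
case E1: (av b su) => //; rewrite hasbE => /hasP [sx Hsx].
case E2: (av a sx) => //; case E3: (av sx su) => //; rewrite hasbE => /hasP [sy Hsy].
case E4: (av c sy) => //; case E5: (av su sy) => // Hk'.
by exists su, sx, sy; split => //; rewrite E1 E2 E3 E4 E5 Hk'.
Qed.

End PB.
Import PB.

Module PC.

Definition code (f : 'I_4 -> 'I_4) : seq nat := [seq val (f (inord i)) | i <- iota 0 4].

Lemma code_size f : size (code f) = 4.
Proof. by rewrite size_map size_iota. Qed.

Lemma code_nth f (i : 'I_4) : nth 0 (code f) i = val (f i).
Proof. by rewrite (nth_map 0) ?size_iota // nth_iota // add0n inord_val. Qed.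

Lemma code_allp f : injective f -> code f \in allp.
Proof.
move=> fi; apply: allpI; first exact: code_size.
  by apply/allP => x /mapP [i _ ->]; apply: ltn_ord.
rewrite map_inj_in_uniq ?iota_uniq // => i j; rewrite !mem_iota /= => Hi Hj /val_inj /fi H.
by have := congr1 val H; rewrite /= !inordK.
Qed.

Lemma perm_ofl s : s \in allp -> exists p : {perm 'I_4}, forall i : 'I_4, val (p i) = nth 0 s i.
Proof.
case/allpP => Hs Ha Hu.
have Hlt : forall i : 'I_4, nth 0 s i < 4.
  by move=> i; apply: (allP Ha); apply: mem_nth; rewrite Hs.
pose f := fun i : 'I_4 => (inord (nth 0 s i) : 'I_4).
have fi : injective f.
  move=> i j /(congr1 val); rewrite /f /= !inordK // => /eqP.
  by rewrite nth_uniq ?Hs // => /eqP /val_inj.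
by exists (perm fi) => i; rewrite permE /f /= inordK.
Qed.

Lemma ext_perm (R : rel 'I_4) :
  (forall a b b', R a b -> R a b' -> b = b') -> (forall a a' b, R a b -> R a' b -> a = a') ->
  exists p : {perm 'I_4}, forall a b, R a b -> p a = b.
Proof.
move=> Hrow Hcol.
pose F := fun i : nat => oapp (fun b : 'I_4 => val b) 4 [pick b | R (inord i) b].
pose l := map F (iota 0 4).
have Fspec : forall (a b : 'I_4), R a b -> F a = val b.
  move=> a b Rab; rewrite /F inord_val; case: pickP => [b' Hb'|/(_ b)]; last by rewrite Rab.
  by rewrite (Hrow _ _ _ Hb' Rab).
have Hl : l \in tuples 4 5.
  rewrite tuplesP size_map size_iota eqxx andTb; apply/allP => x /mapP [i _ ->].
  by rewrite /F; case: pickP => [b _|_] //=; apply: (@ltn_trans 4).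
have Hu : uniq (filter (fun x => x != 4) l).
  rewrite filter_map map_inj_in_uniq ?filter_uniq ?iota_uniq //.
  move=> i j; rewrite !mem_filter !mem_iota /= /F.
  case: pickP => [bi Hi|_] //= /andP [_ Hi4]; case: pickP => [bj Hj|_] //= /andP [_ Hj4].
  move/val_inj => E; rewrite E in Hi; have := Hcol _ _ _ Hi Hj => /(congr1 (@nat_of_ord 4)).
  by rewrite !inordK.
have := PEc; rewrite /PEb allbE => /allP /(_ _ Hl); rewrite Hu hasbE => /hasP [s Hs He].
have [p Hp] := perm_ofl Hs.
exists p => a b Rab; apply: val_inj; rewrite Hp.
have := extlP He (ltn_ord a).
case/allpP: Hs => -> _ _ => /(_ (ltn_ord a)).
rewrite /l (nth_map 0) ?size_iota // nth_iota // add0n (Fspec _ _ Rab).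
by case/orP => /eqP // E; have := ltn_ord b; rewrite E.
Qed.

End PC.
Import PC.

Module PE.
Import Order.TTheory GRing.Theory Num.Theory.

Section Discharge.
Variables (T : finType) (e : rel T).
Hypothesis esymm : symmetric e.
Hypothesis eirr : irreflexive e.
Hypothesis mad : mad_lt e (10%:R / 3%:R)%R.

Definition deg (S : {set T}) v := #|[set w in S | e v w]|.

Lemma sum_bool (A : {set T}) (P : pred T) : \sum_(w in A) (P w : nat) = #|[set w in A | P w]|.
Proof.
have -> : #|[set w in A | P w]| = \sum_(w in A | P w) 1.
  by rewrite -sum1_card; apply: eq_bigl => w; rewrite inE.
by rewrite big_mkcondr; apply: eq_bigr => w _; case: (P w).
Qed.

Lemma avg_bound S : S != set0 -> 3 * \sum_(v in S) deg S v < 10 * #|S|.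
Proof.
move=> HS; have := mad HS esymm (fun x y H => H); rewrite /avg_deg.
have Hpos : (0 < #|S|)%N by rewrite card_gt0.
rewrite ltr_pdivrMr ?ltr0n // => H.
rewrite -(ltr_nat rat) !natrM.
rewrite /deg in H *.
move: H; set n := (\sum_(v in S) _)%N; move=> H.
lra.
Qed.

Definition gw S v w : nat := if deg S v == 3 then (if deg S w == 3 then 18 else 21)
   else (if deg S w == 3 then 15 else 18).

Lemma config S : S != set0 -> (exists2 v, v \in S & deg S v <= 2) \/
  (exists u x y, [/\ u \in S, x \in S, y \in S, x != y &
       [/\ e u x, e u y, deg S u = 3, deg S x = 3 & deg S y = 3]]).
Proof.
move=> HS.
case: (boolP [exists v in S, deg S v <= 2]) => [/existsP [v /andP [Hv Hd]]|H1].
  by left; exists v.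
case: (boolP [exists u in S, exists x in S, exists y in S, [&& x != y, e u x, e u y,
   deg S u == 3, deg S x == 3 & deg S y == 3]]).
  move=> /existsP [u /andP [Hu /existsP [x /andP [Hx /existsP [y /andP [Hy H]]]]]].
  right; exists u, x, y.
  case/andP: H => Nxy /andP [Ex /andP [Ey /andP [/eqP Du /andP [/eqP Dx /eqP Dy]]]].
  by split.
move=> H2; exfalso.
have Hd3 : forall v, v \in S -> 3 <= deg S v.
  move=> v Hv; rewrite leqNgt; apply/negP => Hlt; move/negP: H1; apply.
  by apply/existsP; exists v; rewrite Hv.
have H3 : forall u x y, u \in S -> x \in S -> y \in S -> e u x -> e u y ->
    deg S u = 3 -> deg S x = 3 -> deg S y = 3 -> x = y.
  move=> u x y Hu Hx Hy Ex Ey Du Dx Dy; apply/eqP; apply/negPn/negP => Nxy.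
  move/negP: H2; apply; apply/existsP; exists u; rewrite Hu; apply/existsP; exists x; rewrite Hx.
  apply/existsP; exists y; rewrite Hy Nxy Ex Ey Du Dx Dy; by [].
pose X := \sum_(v in S) \sum_(w in S) (e v w : nat) * gw S v w.
have Hv60 : forall v, v \in S -> 60 <= \sum_(w in S) (e v w : nat) * gw S v w.
  move=> v Hv.
  case D3: (deg S v == 3).
    have Hc : #|[set w in S | e v w && (deg S w == 3)]| <= 1.
      apply/card_le1_eqP => x y; rewrite !inE => /andP [Hx /andP [Ex Dx]] /andP [Hy /andP [Ey Dy]].
      by apply: (H3 v) => //; apply/eqP.
    have Hp : \sum_(w in S) (21 * (e v w : nat)) <=
        \sum_(w in S) ((e v w : nat) * gw S v w + 3 * ((e v w && (deg S w == 3)) : nat)).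
      by apply: leq_sum => w _; rewrite /gw D3; case: (e v w); case: (deg S w == 3).
    move: Hp; rewrite -big_distrr /= big_split /= -big_distrr /= !sum_bool -/(deg S v).
    move/eqP: D3 => ->; lia.
  have D4 : 4 <= deg S v by have := Hd3 v Hv; rewrite leq_eqVlt eq_sym D3.
  have Hp : \sum_(w in S) (15 * (e v w : nat)) <= \sum_(w in S) (e v w : nat) * gw S v w.
    by apply: leq_sum => w _; rewrite /gw D3; case: (e v w); case: (deg S w == 3).
  move: Hp; rewrite -big_distrr /= sum_bool -/(deg S v); lia.
have HX1 : 60 * #|S| <= X.
  rewrite mulnC -sum_nat_const; exact: leq_sum.
have HX2 : X + X = 36 * \sum_(v in S) deg S v.
  have HXs : X = \sum_(v in S) \sum_(w in S) (e v w : nat) * gw S w v.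
    rewrite /X exchange_big /=; apply: eq_bigr => v _; apply: eq_bigr => w _; by rewrite esymm.
  rewrite {2}HXs /X -big_split /= big_distrr /=; apply: eq_bigr => v _.
  rewrite -big_split /= /deg -sum_bool big_distrr /=; apply: eq_bigr => w _.
  rewrite -mulnDr mulnC; congr (_ * _); rewrite /gw.
  by case: (deg S v == 3); case: (deg S w == 3).
have := avg_bound HS; lia.
Qed.

End Discharge.

End PE.
Import PE.

Module PD.

Section Cover.
Variables (T : finType) (e : rel T) (VH : finType) (h : rel VH) (L : T -> {set VH}).
Hypothesis esymm : symmetric e.
Hypothesis eirr : irreflexive e.
Hypothesis cov : corr_cover e h L.
Hypothesis k4 : k_fold L 4.
Hypothesis mad : mad_lt e (10%:R / 3%:R)%R.

Lemma hsym : symmetric h. Proof. have [[Hs Hi] _] := cov. exact: Hs. Qed.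
Lemma hirr : irreflexive h. Proof. have [[Hs Hi] _] := cov. exact: Hi. Qed.
Lemma Ldisj u v : u != v -> [disjoint L u & L v]. Proof. by case: cov => _ [_ [H _]]; apply: H. Qed.
Lemma noedge u v x y : u != v -> ~~ e u v -> x \in L u -> y \in L v -> ~~ h x y.
Proof. by case: cov => _ [_ [_ [_ [H _]]]]; apply: H. Qed.
Lemma matching u v x y y' : e u v -> x \in L u -> y \in L v -> y' \in L v -> h x y -> h x y' -> y = y'.
Proof. by case: cov => _ [_ [_ [_ [_ H]]]]; apply: H. Qed.

Definition g (v : T) (i : 'I_4) : VH := enum_val (cast_ord (esym (k4 v)) i).
Lemma gP v i : g v i \in L v. Proof. exact: enum_valP. Qed.
Lemma g_inj v : injective (g v).
Proof. by move=> i j /enum_val_inj /cast_ord_inj. Qed.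

Lemma in_two_L u v x : x \in L u -> x \in L v -> u = v.
Proof.
move=> Hu Hv; apply/eqP; apply/negPn/negP => /Ldisj /disjointFr /(_ Hu).
by rewrite Hv.
Qed.

Definition M u v (a b : 'I_4) := h (g u a) (g v b).
Lemma M_sym u v a b : M u v a b = M v u b a.
Proof. by rewrite /M hsym. Qed.
Lemma M_row u v a b b' : e u v -> M u v a b -> M u v a b' -> b = b'.
Proof. by move=> E H1 H2; apply: g_inj; apply: (matching E (gP u a) (gP v b) (gP v b')). Qed.
Lemma M_col u v a a' b : e u v -> M u v a b -> M u v a' b -> a = a'.
Proof.
move=> E; rewrite !(M_sym u v) => H1 H2; apply: g_inj.
by apply: (matching _ (gP v b) (gP u a) (gP u a')) => //; rewrite esymm.
Qed.
Lemma M_noe u v a b : u != v -> ~~ e u v -> ~~ M u v a b.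
Proof. by move=> H1 H2; apply: (noedge H1 H2 (gP u a) (gP v b)). Qed.

Lemma M_ext u v : e u v -> exists p : {perm 'I_4}, forall a b, M u v a b -> p a = b.
Proof. move=> E; apply: ext_perm => [a b b'|a a' b]; [exact: M_row | exact: M_col]. Qed.

Definition good (S : {set T}) (col : T -> {perm 'I_4}) :=
  forall u v, u \in S -> v \in S -> e u v -> forall i, ~~ M u v (col u i) (col v i).

Lemma combine (S R : {set T}) (col' col'' : T -> {perm 'I_4}) : good S col' ->
  (forall r w, r \in R -> w \in S -> e w r -> forall i, ~~ M w r (col' w i) (col'' r i)) ->
  (forall r r', r \in R -> r' \in R -> e r r' -> forall i, ~~ M r r' (col'' r i) (col'' r' i)) ->
  good (S :|: R) (fun v => if v \in R then col'' v else col' v).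
Proof.
move=> G H1 H2 u v; rewrite !inE => Hu Hv E i.
case Ru: (u \in R); case Rv: (v \in R).
- exact: H2.
- rewrite M_sym; apply: H1 => //; first by move: Hv; rewrite Rv orbF.
  by rewrite esymm.
- by apply: H1 => //; move: Hu; rewrite Ru orbF.
- by apply: G => //; [move: Hu; rewrite Ru orbF | move: Hv; rewrite Rv orbF].
Qed.

(* perm forced by an already-coloured neighbour w of r *)
Definition extp (col : T -> {perm 'I_4}) (w r : T) : {perm 'I_4} :=
  odflt 1%g [pick p : {perm 'I_4} | [forall a, forall b, M w r (col w a) b ==> (p a == b)]].

Lemma extpP (col : T -> {perm 'I_4}) w r i j : e w r -> M w r (col w i) j -> extp col w r i = j.
Proof.
move=> E Hm; rewrite /extp; case: pickP => [p /forallP /(_ i) /forallP /(_ j) /implyP /(_ Hm) /eqP //|none].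
have [p Hp] : exists p : {perm 'I_4}, forall a b, M w r (col w a) b -> p a = b.
  have [q Hq] := M_ext E.
  have Hr : forall a b b', M w r (col w a) b -> M w r (col w a) b' -> b = b'.
    by move=> a b b'; apply: M_row.
  apply: ext_perm => // a a' b H1 H2; apply: perm_inj (M_col E H1 H2).
by have := none p; move/negbT/negP; case; apply/forallP => a; apply/forallP => b; apply/implyP => /Hp ->.
Qed.

Lemma le2_cover (x0 : T) (A : {set T}) : #|A| <= 2 -> exists w1 w2, forall w, w \in A -> w = w1 \/ w = w2.
Proof.
rewrite cardE; case E: (enum A) => [|a [|b [|c s]]] // _.
- by exists x0, x0 => w; rewrite -mem_enum E.
- by exists a, a => w; rewrite -mem_enum E inE => /eqP; left.
- by exists a, b => w; rewrite -mem_enum E !inE => /orP [] /eqP; [left|right].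
Qed.


Lemma le1_cover (x0 : T) (A : {set T}) : #|A| <= 1 -> exists w1, forall w, w \in A -> w = w1.
Proof.
move=> H; case: (set_0Vmem A) => [->|[a Ha]]; first by exists x0 => w; rewrite inE.
by exists a => w Hw; apply: (card_le1_eqP H).
Qed.

Lemma av_dec s t (p q : {perm 'I_4}) : s \in allp -> t \in allp ->
  (forall i, val (p i) = nth 0 s i) -> (forall i, val (q i) = nth 0 t i) -> av s t -> forall i, p i != q i.
Proof.
move=> Hs Ht Hp Hq Ha i; have := @avP s t i Ha.
case/allpP: Hs => -> _ _; case/allpP: Ht => -> _ _; move=> /(_ (ltn_ord i) (ltn_ord i)).
by rewrite -Hp -Hq; apply: contra => /eqP ->.
Qed.

Lemma avk_dec k sx sy (kp px py : {perm 'I_4}) : k \in allp -> sx \in allp -> sy \in allp ->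
  (forall i, val (kp i) = nth 0 k i) -> (forall i, val (px i) = nth 0 sx i) ->
  (forall i, val (py i) = nth 0 sy i) -> avk k sx sy -> forall i, py i != kp (px i).
Proof.
move=> Hk Hs Ht Hkp Hp Hq Ha i; have := @avkP k sx sy i Ha.
case/allpP: Hs => -> _ _; case/allpP: Ht => -> _ _; move=> /(_ (ltn_ord i) (ltn_ord i)).
by rewrite -Hp -Hq -Hkp; apply: contra => /eqP ->.
Qed.

Lemma code_nthE (p : {perm 'I_4}) i : val (p i) = nth 0 (code p) i.
Proof. by rewrite code_nth. Qed.

Lemma code_permP (p : {perm 'I_4}) : code p \in allp.
Proof. exact/code_allp/perm_inj. Qed.
Arguments code_permP p.

Lemma in3E (w u x y : T) : (w \in [set u; x; y]) = [|| w == u, w == x | w == y].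
Proof. by rewrite !inE ?orbA. Qed.

Lemma finish3 (S : {set T}) (u x y : T) (col' : T -> {perm 'I_4}) (su sx sy : {perm 'I_4}) :
  u \in S -> x \in S -> y \in S -> x != u -> y != u -> x != y ->
  good (S :\: [set u; x; y]) col' ->
  (forall w i, w \in S :\: [set u; x; y] -> e w u -> extp col' w u i != su i) ->
  (forall w i, w \in S :\: [set u; x; y] -> e w x -> extp col' w x i != sx i) ->
  (forall w i, w \in S :\: [set u; x; y] -> e w y -> extp col' w y i != sy i) ->
  (forall i, ~~ M x u (sx i) (su i)) -> (forall i, ~~ M u y (su i) (sy i)) ->
  (forall i, ~~ M x y (sx i) (sy i)) ->
  exists col, good S col.
Proof.
move=> Hu Hx Hy Nxu Nyu Nxy G' Pu Px Py Pxu Puy Pxy.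
pose c'' := fun w => if w == u then su else if w == x then sx else sy.
have Hsub : [set u; x; y] \subset S.
  by apply/subsetP => w; rewrite in3E => /or3P [] /eqP ->.
exists (fun v => if v \in [set u; x; y] then c'' v else col' v).
have ES : (S :\: [set u; x; y]) :|: [set u; x; y] = S.
  by rewrite setUC -{2}(setID S [set u; x; y]) (setIidPr Hsub).
have Nux : u != x by rewrite eq_sym.
have Nuy : u != y by rewrite eq_sym.
have Nyx : y != x by rewrite eq_sym.
rewrite -{1}ES; apply: combine => //.
- move=> r w; rewrite in3E => /or3P [] /eqP -> Hw E i; apply/negP => /(extpP E);
  rewrite /c'' ?eqxx ?(negbTE Nxu) ?(negbTE Nyu) ?(negbTE Nxy) ?(negbTE Nyx) /=; apply/eqP.
  + exact: Pu.
  + exact: Px.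
  + exact: Py.
  move=> r r'; rewrite !in3E => /or3P [] /eqP -> /or3P [] /eqP -> E i;
  rewrite /c'' ?eqxx ?(negbTE Nxu) ?(negbTE Nyu) ?(negbTE Nxy) ?(negbTE Nux) ?(negbTE Nuy) ?(negbTE Nyx) /=;
  rewrite ?eirr // in E *;
  first [exact: Pxu | exact: Puy | exact: Pxy | rewrite M_sym; first [exact: Pxu | exact: Puy | exact: Pxy]].
Qed.

Lemma card_D1m (A : {set T}) a : a \in A -> #|A :\ a| = #|A| - 1.
Proof. by move=> Ha; rewrite (cardsD1 a A) Ha add1n subn1. Qed.

Lemma card_D2m (A : {set T}) a b : a \in A -> b \in A -> b != a -> #|A :\ a :\ b| = #|A| - 2.
Proof.
move=> Ha Hb Nab; rewrite card_D1m ?card_D1m //; first by lia.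
by rewrite !inE Nab.
Qed.

Lemma main_ind n : forall S : {set T}, #|S| <= n -> exists col, good S col.
Proof.
elim: n => [|n IH] S HS.
  exists (fun _ => 1%g) => u v; move: HS; rewrite leqn0 cards_eq0 => /eqP ->.
  by rewrite inE.
case: (eqVneq S set0) => [->|HS0].
  by exists (fun _ => 1%g) => u v; rewrite inE.
case: (config esymm mad HS0) => [[v Hv Hd]|[u [x [y [Hu Hx Hy Nxy [Ex Ey Du Dx Dy]]]]]].
-
  have HS' : #|S :\ v| <= n by move: HS; rewrite (cardsD1 v S) Hv.
  have [col' G'] := IH _ HS'.
  have HN : #|[set w in S :\ v | e w v]| <= 2.
    apply: leq_trans Hd; apply: subset_leq_card; apply/subsetP => w.
    by rewrite !inE => /andP [/andP [_ ->]]; rewrite esymm.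
  have [w1 [w2 Hw]] := le2_cover v HN.
  have [s Hs /andP [A1 A2]] := LA_list (code_permP (extp col' w1 v)) (code_permP (extp col' w2 v)).
  have [sg Hsg] := perm_ofl Hs.
  exists (fun w => if w \in [set v] then (fun _ => sg) w else col' w).
  rewrite -{1}(setD1K Hv) setUC; apply: combine => //.
  + move=> r w; rewrite inE => /eqP -> Hw' E i; apply/negP => /(extpP E) Hx.
    have : w \in [set w in S :\ v | e w v] by rewrite inE Hw' E.
    case/Hw => Ew; rewrite Ew in Hx.
    * by have := av_dec (code_permP _) Hs (code_nthE _) Hsg A1 i; rewrite Hx eqxx.
    * by have := av_dec (code_permP _) Hs (code_nthE _) Hsg A2 i; rewrite Hx eqxx.
  + by move=> r r'; rewrite !inE => /eqP -> /eqP ->; rewrite eirr.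
-
  have Nxu : x != u by apply/eqP => E; move: Ex; rewrite E eirr.
  have Nyu : y != u by apply/eqP => E; move: Ey; rewrite E eirr.
  have HuR : u \in [set u; x; y] by rewrite in3E eqxx.
  have HS' : #|S :\: [set u; x; y]| <= n.
    have : #|S :\: [set u; x; y]| <= #|S :\ u|.
      apply: subset_leq_card; apply/subsetP => w; rewrite inE in3E => /andP [Hw Hws].
      rewrite !inE Hws andbT; apply: contra Hw => /eqP ->; by rewrite eqxx.
    move: HS; rewrite (cardsD1 u S) Hu; lia.
  have [col' G'] := IH _ HS'.
  have nR : forall w, w \in S :\: [set u; x; y] -> [/\ w \in S, w != u, w != x & w != y].
    move=> w; rewrite inE in3E => /andP [Hw Hws]; split => //; apply: contra Hw => /eqP ->;
    by rewrite eqxx ?orbT.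
  have HNu : #|([set w in S | e u w] :\ x) :\ y| <= 1.
    have m1 : x \in [set w in S | e u w] by rewrite inE Hx Ex.
    have m2 : y \in [set w in S | e u w] by rewrite inE Hy Ey.
    have Nyx : y != x by rewrite eq_sym.
    by move: Du; rewrite /deg => Du'; rewrite card_D2m // Du'.
  have [wu Hwu] := le1_cover u HNu.
  have Hu1 : forall w, w \in S :\: [set u; x; y] -> e w u -> w = wu.
    move=> w Hw E; apply: Hwu; case/nR: Hw => Hw1 H1 H2 H3.
    by rewrite !inE H2 H3 Hw1 esymm E.
  have Exu : e x u by rewrite esymm.
  have [mu Hmu] := M_ext Exu.
  have [nu Hnu] := M_ext Ey.
  case Exy: (e x y).
  +
    have HNx : #|([set w in S | e x w] :\ u) :\ y| <= 1.
      have m1 : u \in [set w in S | e x w] by rewrite inE Hu Exu.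
      have m2 : y \in [set w in S | e x w] by rewrite inE Hy Exy.
      by move: Dx; rewrite /deg => Dx'; rewrite card_D2m // Dx'.
    have HNy : #|([set w in S | e y w] :\ u) :\ x| <= 1.
      have m1 : u \in [set w in S | e y w] by rewrite inE Hu esymm Ey.
      have m2 : x \in [set w in S | e y w] by rewrite inE Hx esymm Exy.
      by move: Dy; rewrite /deg => Dy'; rewrite card_D2m // Dy'.
    have [wx Hwx] := le1_cover x HNx.
    have [wy Hwy] := le1_cover y HNy.
    have [kp Hkp] := M_ext Exy.
    have Hx1 : forall w, w \in S :\: [set u; x; y] -> e w x -> w = wx.
      move=> w Hw E; apply: Hwx; case/nR: Hw => Hw1 H1 H2 H3.
      by rewrite !inE H1 H3 Hw1 esymm E.
    have Hy1 : forall w, w \in S :\: [set u; x; y] -> e w y -> w = wy.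
      move=> w Hw E; apply: Hwy; case/nR: Hw => Hw1 H1 H2 H3.
      by rewrite !inE H1 H2 Hw1 esymm E.
    pose al := extp col' wx x. pose be := extp col' wu u. pose ga := extp col' wy y.
    have [su0 [sx0 [sy0 [Hsu Hsx Hsy /andP [C1 /andP [C2 /andP [C3 /andP [C4 /andP [C5 C6]]]]]]]]] :=
      LC_list (code_permP (al * mu)%g) (code_permP be) (code_permP (ga * nu^-1)%g)
              (code_permP (mu^-1 * kp * nu^-1)%g).
    have [pu Hpu] := perm_ofl Hsu. have [tx Htx] := perm_ofl Hsx. have [ty Hty] := perm_ofl Hsy.
    apply: (@finish3 S u x y col' pu (tx * mu^-1)%g (ty * nu)%g) => //.
    * move=> w i Hw E; rewrite (Hu1 _ Hw E).
      exact: av_dec (code_permP _) Hsu (code_nthE _) Hpu C1 i.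
    * move=> w i Hw E; rewrite (Hx1 _ Hw E) permM; apply/eqP => Q.
      have := av_dec (code_permP _) Hsx (code_nthE _) Htx C2 i.
      by rewrite permM -/al Q permKV eqxx.
    * move=> w i Hw E; rewrite (Hy1 _ Hw E) permM; apply/eqP => Q.
      have := av_dec (code_permP _) Hsy (code_nthE _) Hty C4 i.
      by rewrite permM -/ga Q permK eqxx.
    * move=> i; apply/negP => Hm; have Q := Hmu _ _ Hm; rewrite permM permKV in Q.
      by have := av_dec Hsx Hsu Htx Hpu C3 i; rewrite Q eqxx.
    * move=> i; apply/negP => Hm; have Q := Hnu _ _ Hm; rewrite permM in Q; move/perm_inj: Q => Q.
      by have := av_dec Hsu Hsy Hpu Hty C5 i; rewrite Q eqxx.
    * move=> i; apply/negP => Hm; have Q := Hkp _ _ Hm; rewrite !permM in Q.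
      have := avk_dec (code_permP _) Hsx Hsy (code_nthE _) Htx Hty C6 i.
      by rewrite !permM Q permK eqxx.
  +
    have HNx : #|[set w in S | e x w] :\ u| <= 2.
      have m1 : u \in [set w in S | e x w] by rewrite inE Hu Exu.
      by move: Dx; rewrite /deg => Dx'; rewrite card_D1m // Dx'.
    have HNy : #|[set w in S | e y w] :\ u| <= 2.
      have m1 : u \in [set w in S | e y w] by rewrite inE Hu esymm Ey.
      by move: Dy; rewrite /deg => Dy'; rewrite card_D1m // Dy'.
    have [wx1 [wx2 Hwx]] := le2_cover x HNx.
    have [wy1 [wy2 Hwy]] := le2_cover y HNy.
    have Hx1 : forall w, w \in S :\: [set u; x; y] -> e w x -> w = wx1 \/ w = wx2.
      move=> w Hw E; apply: Hwx; case/nR: Hw => Hw1 H1 H2 H3.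
      by rewrite !inE H1 Hw1 esymm E.
    have Hy1 : forall w, w \in S :\: [set u; x; y] -> e w y -> w = wy1 \/ w = wy2.
      move=> w Hw E; apply: Hwy; case/nR: Hw => Hw1 H1 H2 H3.
      by rewrite !inE H1 Hw1 esymm E.
    pose al1 := extp col' wx1 x. pose al2 := extp col' wx2 x. pose be := extp col' wu u.
    pose ga1 := extp col' wy1 y. pose ga2 := extp col' wy2 y.
    have [su0 [Hsu C1 G1 G2]] :=
      LB_list (code_permP (al1 * mu)%g) (code_permP (al2 * mu)%g) (code_permP be)
              (code_permP (ga1 * nu^-1)%g) (code_permP (ga2 * nu^-1)%g).
    move: G1 G2; rewrite !goodxP => /hasP [sx0 Hsx /and3P [C2 C3 C4]] /hasP [sy0 Hsy /and3P [C5 C6 C7]].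
    have [pu Hpu] := perm_ofl Hsu. have [tx Htx] := perm_ofl Hsx. have [ty Hty] := perm_ofl Hsy.
    apply: (@finish3 S u x y col' pu (tx * mu^-1)%g (ty * nu)%g) => //.
    * move=> w i Hw E; rewrite (Hu1 _ Hw E).
      exact: av_dec (code_permP _) Hsu (code_nthE _) Hpu C1 i.
    * move=> w i Hw E; rewrite permM; apply/eqP => Q.
      case: (Hx1 _ Hw E) => Ew; rewrite Ew in Q.
      - have := av_dec (code_permP _) Hsx (code_nthE _) Htx C2 i.
        by rewrite permM -/al1 Q permKV eqxx.
      - have := av_dec (code_permP _) Hsx (code_nthE _) Htx C3 i.
        by rewrite permM -/al2 Q permKV eqxx.
    * move=> w i Hw E; rewrite permM; apply/eqP => Q.
      case: (Hy1 _ Hw E) => Ew; rewrite Ew in Q.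
      - have := av_dec (code_permP _) Hsy (code_nthE _) Hty C5 i.
        by rewrite permM -/ga1 Q permK eqxx.
      - have := av_dec (code_permP _) Hsy (code_nthE _) Hty C6 i.
        by rewrite permM -/ga2 Q permK eqxx.
    * move=> i; apply/negP => Hm; have Q := Hmu _ _ Hm; rewrite permM permKV in Q.
      by have := av_dec Hsu Hsx Hpu Htx C4 i; rewrite Q eqxx.
    * move=> i; apply/negP => Hm; have Q := Hnu _ _ Hm; rewrite permM in Q; move/perm_inj: Q => Q.
      by have := av_dec Hsu Hsy Hpu Hty C7 i; rewrite Q eqxx.
    * move=> i; apply: M_noe => //; by rewrite Exy.
Qed.

End Cover.

End PD.
Import PD.

Theorem mainTheorem2 (T : finType) (e : rel T) :
  simple_graph e -> mad_lt e (10%:R / 3%:R)%R -> chi_c_star_le e 4.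
Proof.
move=> [esymm eirr] mad; exists 4; split => //.
move=> VH h L cov k4.
have [col G] := main_ind esymm eirr cov k4 mad (leqnn #|[set: T]|).
pose P := fun i : 'I_4 => [set g k4 v (col v i) | v : T].
exists P; split.
- move=> i; split.
  + move=> a b /imsetP [v _ ->] /imsetP [w _ ->].
    case: (eqVneq v w) => [<-|Nvw]; first by rewrite (hirr cov).
    case Evw: (e v w); first by apply: (G v w) => //; rewrite inE.
    by apply: (noedge cov Nvw) => //; [rewrite Evw | apply: gP | apply: gP].
  + move=> v; have -> : P i :&: L v = [set g k4 v (col v i)].
      apply/setP => z; rewrite !inE; apply/andP/eqP => [[/imsetP [w _ ->] Hz] | ->].
        by rewrite (in_two_L cov (gP k4 w _) Hz).
      by split; [apply/imsetP; exists v | apply: gP].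
    by rewrite cards1.
- move=> i j Nij; apply/pred0P => z /=; apply/negbTE/andP => -[/imsetP [v _ ->] /imsetP [w _ E]].
  have Hw : g k4 v (col v i) \in L w by rewrite E; apply: gP.
  have Evw := in_two_L cov (gP k4 v _) Hw.
  rewrite -Evw in E; move/g_inj/perm_inj: E => E.
  by rewrite E eqxx in Nij.
Qed.
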